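(* For every integer $k \ge 1$ and all $\alpha > 0$ and $\lambda > 0$, there exists $\tau > 0$ such that the following holds. Let $V_1,\dots,V_k$ be finite sets and let $d$ be an integer with $2 \le d \le \min\{|V_1|,\dots,|V_k|\}$. Suppose that $\mathcal{H} \subseteq V_1 \times \dots \times V_k$ satisfies $|\mathcal{H}| \le \tau \prod_{i=1}^k |V_i|$, and let $W_1,\dots,W_k$ be independent uniformly chosen random $d$-element subsets of $V_1,\dots,V_k$, respectively. Then \[ \Pr\left(|\mathcal{H} \cap (W_1 \times \dots \times W_k)| > \lambda d^k\right) \le \alpha^d. \] *)

(* Defs.v *)
From HB Require Import structures.
From mathcomp Require Import all_boot all_order all_algebra.
From mathcomp Require Import reals.
Set Implicit Arguments. Unset Strict Implicit. Unset Printing Implicit Defensive.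
Import Order.TTheory GRing.Theory Num.Theory.
Local Open Scope ring_scope.

(* The finite sets V_1, ..., V_k are modelled as subsets V i of a common
   finite type T; elements of V_1 x ... x V_k are functions x : 'I_k -> T
   with x i \in V i. *)

(* The sample space of the random experiment: families (W_1,...,W_k) with
   W_i a d-element subset of V_i. Independent uniform choice of the W_i is
   the uniform distribution on this finite set. *)
Definition dsubfamilies (T : finType) (k : nat) (V : 'I_k -> {set T}) (d : nat)
  : {set {ffun 'I_k -> {set T}}} :=
  [set W : {ffun 'I_k -> {set T}} | [forall i, (W i \subset V i) && (#|W i| == d)]].

Definition box_inter (T : finType) (k : nat) (H : {set {ffun 'I_k -> T}})
  (W : {ffun 'I_k -> {set T}}) : {set {ffun 'I_k -> T}} :=
  [set x in H | [forall i, x i \in W i]].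

Definition unif_prob (R : realType) (S : finType) (Omega : {set S}) (E : pred S) : R :=
  #|[set w in Omega | E w]|%:R / #|Omega|%:R.

(* Main.v *)
Require Import Defs.
From HB Require Import structures.
From mathcomp Require Import all_boot all_order all_algebra.
From mathcomp Require Import reals.
Import Order.TTheory GRing.Theory Num.Theory.
Set Implicit Arguments. Unset Strict Implicit. Unset Printing Implicit Defensive.
From mathcomp Require Import zify.
Local Open Scope ring_scope.







Lemma card_sum_ind (Z : finType) (A : {set Z}) (Q : pred Z) :
  #|[set z in A | Q z]| = (\sum_(z in A) (Q z : nat))%N.
Proof.
rewrite -sum1_card big_mkcond [RHS]big_mkcond /=.
by apply: eq_bigr => z _; rewrite inE; case: (z \in A); case: (Q z).
Qed.

Lemma union_bound (Y Z : finType) (X : {set Y}) (A : {set Z}) (P : Y -> pred Z) :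
  (#|[set z in A | [exists y in X, P y z]]| <= \sum_(y in X) #|[set z in A | P y z]|)%N.
Proof.
rewrite card_sum_ind (eq_bigr _ (fun y _ => card_sum_ind A (P y))) exchange_big /=.
apply: leq_sum => z _.
case: existsP => [[y /andP[yX Pyz]]|] //.
by rewrite (bigD1 y) //= Pyz.
Qed.

Lemma partition_card (X Y : finType) (f : X -> Y) (A : {set X}) (P : pred Y) :
  (\sum_(y | P y) #|[set x in A | f x == y]|)%N = #|[set x in A | P (f x)]|.
Proof.
rewrite -sum1_card (partition_big f P) /=; last by move=> x; rewrite inE => /andP[].
apply: eq_bigr => y Py; rewrite -sum1_card; apply: eq_bigl => x.
rewrite !inE; case: eqP => [->|]; by rewrite ?Py ?andbT ?andbF.
Qed.

Section Space.
Variables (T : finType) (k : nat) (V : 'I_k -> {set T}) (d : nat).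
Local Notation Om := (dsubfamilies V d).
Definition Dset (i0 : 'I_k) := [set B : {set T} | (B \subset V i0) && (#|B| == d)].
Definition upd (W : {ffun 'I_k -> {set T}}) i0 B : {ffun 'I_k -> {set T}} :=
  [ffun i => if i == i0 then B else W i].
Definition invar i0 (E : pred {ffun 'I_k -> {set T}}) := forall W B, E (upd W i0 B) = E W.

Lemma Om_D W i0 : W \in Om -> W i0 \in Dset i0.
Proof. by rewrite inE => /forallP/(_ i0); rewrite inE. Qed.

Lemma fiber_le i0 E (HE : invar i0 E) B B' : B' \in Dset i0 ->
  (#|[set W in Om | E W && (W i0 == B)]| <= #|[set W in Om | E W && (W i0 == B')]|)%N.
Proof.
move=> HB'.
rewrite -(card_in_imset (f := fun W => upd W i0 B')).
  apply: subset_leq_card; apply/subsetP => W' /imsetP[W].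
  rewrite !inE => /andP[WO /andP[EW /eqP WB]] ->.
  rewrite HE EW /= ffunE !eqxx andbT.
  apply/forallP => i; rewrite /upd ffunE; case: eqP => [->|_]; first by move: HB'; rewrite inE.
  by move: WO => /forallP/(_ i).
move=> W1 W2; rewrite !inE => /andP[_ /andP[_ /eqP W1B]] /andP[_ /andP[_ /eqP W2B]] Heq.
apply/ffunP => i; move: Heq => /ffunP/(_ i); rewrite /upd !ffunE /=.
by case: eqP => [->|//]; rewrite W1B W2B.
Qed.

Lemma count_split i0 E (HE : invar i0 E) : exists c, forall Pb : pred {set T},
  #|[set W in Om | E W && Pb (W i0)]| = (c * #|[set B in Dset i0 | Pb B]|)%N.
Proof.
pose c := if [pick B in Dset i0] is Some B0 then #|[set W in Om | E W && (W i0 == B0)]| else 0%N.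
exists c => Pb.
have := partition_card (fun W : {ffun 'I_k -> {set T}} => W i0) [set W in Om | E W] (fun B => (B \in Dset i0) && Pb B).
have -> : [set x in [set W in Om | E W] | (x i0 \in Dset i0) && Pb (x i0)] =
          [set W in Om | E W && Pb (W i0)].
  apply/setP => W; rewrite !inE; case: (boolP [forall i, _]) => //= /forallP/(_ i0) -> //.
move=> <-; rewrite mulnC -sum_nat_const.
rewrite [RHS](eq_bigl (fun B => (B \in Dset i0) && Pb B)); last by move=> B; rewrite inE.
apply: eq_bigr => B /andP[BD _].
rewrite /c; case: pickP => [B0 B0D|]; last by move=> /(_ B); rewrite BD.
have -> : [set x in [set W in Om | E W] | x i0 == B] = [set W in Om | E W && (W i0 == B)].
  by apply/setP => W; rewrite !inE andbA.
by apply/eqP; rewrite eqn_leq !fiber_le.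
Qed.
End Space.

Lemma card_sup (T : finType) (S U : {set T}) d :
  S \subset U -> (#|S| <= d)%N ->
  #|[set B in [set B : {set T} | (B \subset U) && (#|B| == d)] | S \subset B]| =
  'C(#|U| - #|S|, d - #|S|).
Proof.
move=> SU Sd.
rewrite -(cardsDS SU) -cards_draws.
have injD : {in [set B in [set B : {set T} | (B \subset U) && (#|B| == d)] | S \subset B] &,
   injective (fun B => B :\: S)}.
  move=> B1 B2; rewrite !inE => /andP[_ SB1] /andP[_ SB2] Heq.
  apply/setP => x; case xS: (x \in S); first by rewrite (subsetP SB1) ?(subsetP SB2).
  by have := f_equal (fun C : {set T} => x \in C) Heq; rewrite /= !inE xS.
rewrite -(card_in_imset injD); apply: eq_card => C. rewrite !inE; apply/imsetP/andP.
  case=> B; rewrite !inE => /andP[/andP[BU /eqP Bd] SB] ->; split.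
    by apply/subsetP => x; rewrite !inE => /andP[-> /(subsetP BU) ->].
  by rewrite cardsDS // Bd.
case=> CUS /eqP Cd; exists (C :|: S).
  have SCS : S \subset C :|: S by apply/subsetP => x xS; rewrite inE xS orbT.
  have CSS : (C :|: S) :\: S = C.
    apply/setP => x; rewrite !inE; case xS: (x \in S); rewrite ?orbT ?orbF //=.
    by apply/esym/negbTE/negP => /(subsetP CUS); rewrite !inE xS.
  rewrite !inE SCS andbT; apply/andP; split.
    apply/subsetP => x; rewrite inE => /orP[/(subsetP CUS)|/(subsetP SU)//].
    by rewrite inE => /andP[].
  have := cardsDS SCS; rewrite CSS Cd => h.
  have := subset_leq_card SCS => h2; apply/eqP; lia.
apply/setP => x; rewrite !inE; case xS: (x \in S); rewrite ?orbT ?orbF //=.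
by apply/negbTE/negP => /(subsetP CUS); rewrite !inE xS.
Qed.
From HB Require Import structures.
From mathcomp Require Import all_boot all_order all_algebra.
From mathcomp Require Import reals zify ring.
Import Order.TTheory GRing.Theory Num.Theory.
Set Implicit Arguments. Unset Strict Implicit. Unset Printing Implicit Defensive.
Local Open Scope nat_scope.

Lemma bin_mul n d m : (m <= d)%N -> (d <= n)%N ->
  ('C(n, d) * 'C(d, m) = 'C(n, m) * 'C(n - m, d - m))%N.
Proof.
move=> md dn.
have F0 : (0 < m`! * (d - m)`! * (n - d)`!)%N by rewrite !muln_gt0 !fact_gt0.
apply/eqP; rewrite -(eqn_pmul2r F0); apply/eqP.
have b1 := bin_fact dn.
have b2 := bin_fact md.
have b3 : (m <= n)%N by apply: leq_trans dn.
have b4 := bin_fact b3.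
have e : (n - m - (d - m) = n - d)%N by lia.
have b5 : (d - m <= n - m)%N by lia.
have b6 := bin_fact b5; rewrite e in b6.
have h1 : ('C(n, d) * 'C(d, m) * (m`! * (d - m)`! * (n - d)`!) = n`!)%N.
  by rewrite -b1 -b2; ring.
have h2 : ('C(n, m) * 'C(n - m, d - m) * (m`! * (d - m)`! * (n - d)`!) = n`!)%N.
  by rewrite -b4 -b6; ring.
by rewrite h1 h2.
Qed.

Lemma ffact_ineq a n m : (a <= n)%N -> (a ^_ m * n ^ m <= a ^ m * n ^_ m)%N.
Proof.
move=> an; elim: m => [|m IH]; first by rewrite !ffactn0.
rewrite !ffactnSr !expnSr.
have h : ((a - m) * n <= a * (n - m))%N by nia.
have := leq_mul IH h.
by rewrite -!mulnA (mulnCA (a - m)) (mulnCA a).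
Qed.

Lemma bin_ineq a n m : (a <= n)%N -> ('C(a, m) * n ^ m <= a ^ m * 'C(n, m))%N.
Proof.
move=> an; rewrite -(leq_pmul2r (fact_gt0 m)).
by rewrite mulnAC bin_ffact -mulnA bin_ffact ffact_ineq.
Qed.

Lemma bin_le_exp2 d m : ('C(d, m) <= 2 ^ d)%N.
Proof.
have := cards_draws [set: 'I_d] m; rewrite cardsT card_ord => <-.
apply: (leq_trans (subset_leq_card (B := powerset [set: 'I_d]) _)).
  by apply/subsetP => A; rewrite inE powersetE => /andP[].
by rewrite card_powerset cardsT card_ord.
Qed.
Local Open Scope ring_scope.
Section One.
Variables (T : finType) (k : nat) (V : 'I_k -> {set T}) (d : nat).
Local Notation Om := (dsubfamilies V d).
Local Open Scope ring_scope.

Lemma sup_count i0 (S : {set T}) : S \subset V i0 -> (#|S| <= d)%N ->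
  (#|[set W in Om | S \subset W i0]| * 'C(#|V i0|, d) =
   #|Om| * 'C(#|V i0| - #|S|, d - #|S|))%N.
Proof.
move=> SV Sd.
have [c Hc] := count_split V d (i0 := i0) (E := predT) (fun _ _ => erefl).
have e1 : [set W in Om | S \subset W i0] = [set W in Om | predT W && (S \subset W i0)].
  by apply/setP => W; rewrite !inE.
have e2 : Om = [set W in Om | predT W && predT (W i0)].
  by apply/setP => W; rewrite !inE /= !andbT.
rewrite e1 {2}e2 (Hc (fun B => S \subset B)) (Hc predT) /Dset (card_sup SV Sd).
have -> : #|[set B in [set B : {set T} | (B \subset V i0) && (#|B| == d)] | predT B]| = 'C(#|V i0|, d).
  by rewrite -cards_draws; apply: eq_card => B; rewrite !inE andbT.
by rewrite mulnAC.
Qed.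

Lemma one_dim_nat i0 (L : {set T}) m : L \subset V i0 -> (d <= #|V i0|)%N ->
  (#|[set W in Om | (m <= #|W i0 :&: L|)%N]| * #|V i0| ^ m <=
   #|L| ^ m * #|Om| * 2 ^ d)%N.
Proof.
move=> LV dn; set n := #|V i0|; set a := #|L|.
have [md|dm] := leqP m d; last first.
  rewrite (_ : [set W in Om | _] = set0) ?cards0 //.
  apply/setP => W; rewrite !inE; apply/negbTE; rewrite negb_and.
  case: (boolP [forall i, _]) => //= /forallP/(_ i0)/andP[_ /eqP Wd].
  rewrite -ltnNge; apply: leq_ltn_trans dm; rewrite -Wd; apply: subset_leq_card.
  by apply/subsetP => x; rewrite inE => /andP[].
set Sm := [set S : {set T} | S \subset L & #|S| == m].
have N1 : (#|[set W in Om | (m <= #|W i0 :&: L|)%N]| * 'C(n, d) <=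
           'C(a, m) * #|Om| * 'C(n - m, d - m))%N.
  have U := union_bound Sm Om (fun S W => S \subset W i0).
  have step : (#|[set W in Om | (m <= #|W i0 :&: L|)%N]| <=
               #|[set z in Om | [exists y in Sm, y \subset z i0]]|)%N.
    apply: subset_leq_card; apply/subsetP => W; rewrite !inE => /andP[-> mW] /=.
    have := cards_draws (W i0 :&: L) m.
    have : (0 < 'C(#|W i0 :&: L|, m))%N by rewrite bin_gt0.
    move=> /[swap] <-; rewrite card_gt0 => /set0Pn[S]; rewrite inE => /andP[SWL Sm'].
    apply/existsP; exists S; rewrite inE (subset_trans SWL) ?subsetIr //=.
    by rewrite Sm' (subset_trans SWL) ?subsetIl.
  apply: (leq_trans (leq_mul (leq_trans step U) (leqnn 'C(n, d)))).
  rewrite big_distrl /=.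
  rewrite (eq_bigr (fun _ => #|Om| * 'C(n - m, d - m))%N); last first.
    move=> S; rewrite inE => /andP[SL /eqP Sm'].
    by rewrite -Sm' sup_count ?(subset_trans SL) // Sm'.
  by rewrite sum_nat_const cards_draws -/a mulnA.
have N2 := bin_mul md dn.
have N3 : (a <= n)%N by apply: subset_leq_card.
have N3' := bin_ineq m N3.
have N4 := bin_le_exp2 d m.
set c := #|[set W in Om | _]| in N1 *.
have Cnd : (0 < 'C(n, d))%N by rewrite bin_gt0.
have Cnm : (0 < 'C(n, m))%N by rewrite bin_gt0 (leq_trans md).
have N5 : (c * 'C(n, m) <= 'C(a, m) * #|Om| * 'C(d, m))%N.
  rewrite -(leq_pmul2r Cnd).
  have := leq_mul N1 (leqnn 'C(n, m)).
  have e : ('C(a, m) * #|Om| * 'C(n - m, d - m) * 'C(n, m) =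
            'C(a, m) * #|Om| * ('C(n, d) * 'C(d, m)))%N.
    by rewrite N2; ring.
  move=> h; apply: (leq_trans _ (leq_trans h _)); first by apply: eq_leq; ring.
  by rewrite e; apply: eq_leq; ring.
rewrite -(leq_pmul2r Cnm).
have h := leq_mul N5 (leqnn (n ^ m)).
have h2 := leq_mul (leq_mul N3' (leqnn #|Om|)) (leqnn 'C(d, m)).
have h3 := leq_mul (leqnn (a ^ m * 'C(n, m) * #|Om|)) N4.
apply: (leq_trans _ (leq_trans h _)); first by apply: eq_leq; ring.
apply: (leq_trans _ (leq_trans h2 _)); first by apply: eq_leq; ring.
apply: (leq_trans h3); apply: eq_leq; ring.
Qed.
End One.

Definition boxJ (T : finType) k (J : {set 'I_k}) (H : {set {ffun 'I_k -> T}})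
  (W : {ffun 'I_k -> {set T}}) := [set x in H | [forall i in J, x i \in W i]].
Definition injJ (T : finType) k (J : {set 'I_k}) (H : {set {ffun 'I_k -> T}}) :=
  forall x y, x \in H -> y \in H -> (forall i, i \in J -> x i = y i) -> x = y.
Definition fib (T : finType) k (H : {set {ffun 'I_k -> T}}) i0 v := [set x in H | x i0 == v].

Lemma box_decomp (T : finType) k (J : {set 'I_k}) H (W : {ffun 'I_k -> {set T}}) i0 :
  i0 \in J -> #|boxJ J H W| = (\sum_(v in W i0) #|boxJ (J :\ i0) (fib H i0 v) W|)%N.
Proof.
move=> i0J.
have := partition_card (fun x : {ffun 'I_k -> T} => x i0) (boxJ J H W) (fun v => v \in W i0).
have -> : [set x in boxJ J H W | x i0 \in W i0] = boxJ J H W.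
  apply/setP => x; rewrite !inE; case: (x \in H) => //=.
  case: (boolP [forall i in J, _]) => //= /forallP/(_ i0); by rewrite i0J.
move=> <-; apply: eq_bigr => v vW; apply: eq_card => x; rewrite !inE.
case xv: (x i0 == v); rewrite ?andbF ?andbT //=; move/eqP: xv => xv.
case: (x \in H) => //=; apply/forallP/forallP => h i.
  by rewrite !inE; apply/implyP => /andP[_ iJ]; exact: (implyP (h i) iJ).
apply/implyP => iJ; case: (eqVneq i i0) => [->|ne]; first by rewrite xv.
by have := h i; rewrite !inE ne iJ.
Qed.

Lemma fib_inj (T : finType) k (J : {set 'I_k}) (H : {set {ffun 'I_k -> T}}) i0 v :
  injJ J H -> injJ (J :\ i0) (fib H i0 v).
Proof.
move=> hinj x y; rewrite !inE => /andP[xH /eqP xv] /andP[yH /eqP yv] h.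
apply: hinj => // i iJ; case: (eqVneq i i0) => [->|ne]; first by rewrite xv yv.
by apply: h; rewrite !inE ne iJ.
Qed.

Lemma box_bound (T : finType) k d (W : {ffun 'I_k -> {set T}}) :
  (forall i, #|W i| = d) -> forall n (J : {set 'I_k}) H, #|J| = n -> injJ J H ->
  (#|boxJ J H W| <= d ^ n)%N.
Proof.
move=> Wd; elim=> [|n IH] J H Jn hinj.
  have J0 := cards0_eq Jn; rewrite expn0.
  apply/card_le1_eqP => x y; rewrite !inE => /andP[xH _] /andP[yH _].
  by apply: hinj => // i; rewrite J0 inE.
have [i0 i0J] : exists i0, i0 \in J by apply/card_gt0P; rewrite Jn.
rewrite (box_decomp _ _ i0J) expnS -{1}(Wd i0) -sum_nat_const.
apply: leq_sum => v _; apply: IH; last exact: fib_inj.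
by move: Jn; rewrite (cardsD1 i0) i0J => -[].
Qed.
Section Indep.
Variables (T : finType) (k : nat) (V : 'I_k -> {set T}) (d : nat).
Local Notation Om := (dsubfamilies V d).

Lemma indep i0 v E (HE : invar i0 E) :
  (#|[set W in Om | E W && (v \in W i0)]| * #|Om| =
   #|[set W in Om | v \in W i0]| * #|[set W in Om | E W]|)%N.
Proof.
have [c Hc] := count_split V d HE.
have [c1 Hc1] := count_split V d (i0 := i0) (E := predT) (fun _ _ => erefl).
have e1 : [set W in Om | v \in W i0] = [set W in Om | predT W && (v \in W i0)].
  by apply/setP => W; rewrite !inE.
have e2 : Om = [set W in Om | predT W && predT (W i0)].
  by apply/setP => W; rewrite !inE /= !andbT.
have e3 : [set W in Om | E W] = [set W in Om | E W && predT (W i0)].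
  by apply/setP => W; rewrite !inE /= !andbT.
rewrite e1 {2}e2 e3 (Hc (fun B => v \in B)) (Hc predT) (Hc1 (fun B => v \in B)) (Hc1 predT).
ring.
Qed.

Lemma sum_mem i0 (X : {set T}) :
  (\sum_(v in X) #|[set W in Om | v \in W i0]| <= d * #|Om|)%N.
Proof.
rewrite (eq_bigr _ (fun v _ => card_sum_ind Om (fun W => v \in W i0))) exchange_big /=.
rewrite mulnC -sum_nat_const; apply: leq_sum => W WO.
rewrite -(card_sum_ind X (fun v => v \in W i0)).
move: WO; rewrite inE => /forallP/(_ i0)/andP[_ /eqP <-].
by apply: subset_leq_card; apply/subsetP => x; rewrite inE => /andP[].
Qed.
End Indep.

Require Import Defs.
From HB Require Import structures.
From mathcomp Require Import all_boot all_order all_algebra.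
From mathcomp Require Import reals zify ring lra.
Import Order.TTheory GRing.Theory Num.Theory.
Set Implicit Arguments. Unset Strict Implicit. Unset Printing Implicit Defensive.
Local Open Scope ring_scope.

Section Main.
Variables (R : realType) (k : nat).

Lemma claim n : forall alpha lambda : R, 0 < alpha -> 0 < lambda ->
  exists tau : R, 0 < tau /\ tau < 1 /\
  forall (T : finType) (V : 'I_k -> {set T}) (d : nat)
    (H : {set {ffun 'I_k -> T}}) (J : {set 'I_k}),
    #|J| = n -> (1 <= d)%N -> (forall i, d <= #|V i|)%N ->
    (forall x, x \in H -> forall i, i \in J -> x i \in V i) -> injJ J H ->
    #|H|%:R <= tau * \prod_(i in J) (#|V i|%:R : R) ->
    (#|[set W in dsubfamilies V d | lambda * d%:R ^+ n < #|boxJ J H W|%:R]|)%:R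
      <= alpha ^+ d * (#|dsubfamilies V d|)%:R.
Proof.
elim: n => [|n IH] alpha lambda a0 l0.
  exists (1/2); split; first lra; split; first lra.
  move=> T V d H J Jn d1 dV HV hinj Hs.
  have J0 := cards0_eq Jn; rewrite J0 big_set0 mulr1 in Hs.
  have H0 : #|H| = 0%N.
    by apply/eqP; rewrite -leqn0 -ltnS -(ltr_nat R); apply: (le_lt_trans Hs); lra.
  rewrite (_ : [set W in _ | _] = set0) ?cards0 ?mul0r.
    by apply: mulr_ge0; [apply: exprn_ge0; apply: ltW|apply: ler0n].
  apply/setP => W; rewrite !inE; apply/negbTE; rewrite negb_and orbC.
  have -> : boxJ J H W = set0.
    apply/setP => x; rewrite !inE; by rewrite (cards0_eq H0) inE.
  by rewrite cards0 expr0 mulr1 -leNgt ltW.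
have a1 : 0 < alpha / 4 by lra.
have l1 : 0 < lambda / 2 by lra.
have [tau' [t0 [t1 Htau']]] := IH _ _ a1 l1.
pose q := (Num.truncn (2 / lambda)).+1.
have q0 : (0 < q)%N by [].
have qlam : 2 / lambda < q%:R by apply: truncnS_gt.
pose gam := Num.min alpha 1 / 4.
have g0 : 0 < gam by rewrite /gam; apply: divr_gt0 => //; rewrite lt_min a0 ltr01.
have g1 : gam <= 1 / 4 by rewrite /gam ler_pM2r ?invr_gt0 ?ltr0n // ge_min lexx orbT.
have ga : gam <= alpha / 4 by rewrite /gam ler_pM2r ?invr_gt0 ?ltr0n // ge_min lexx.
pose rho := gam ^+ q.
have r0 : 0 < rho by apply: exprn_gt0.
have r1 : rho <= 1 by apply: exprn_ile1; lra.
exists (tau' * rho); split; first exact: mulr_gt0.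
split; first by apply: (le_lt_trans (ler_piMr _ r1)) => //; apply: ltW.
move=> T V d H J Jn d1 dV HV hinj Hs.
set Om := dsubfamilies V d.
have [i0 i0J] : exists i0, i0 \in J.
  by apply/card_gt0P; rewrite Jn.
set J' := J :\ i0.
have J'n : #|J'| = n by move: Jn; rewrite (cardsD1 i0) i0J => -[].
set n0 := #|V i0|.
have n0pos : (0 < n0)%N by apply: leq_trans (dV i0).
set P' := \prod_(i in J') (#|V i|%:R : R).
have P'pos : 0 < P'.
  by apply: prodr_gt0 => i _; rewrite ltr0n; apply: leq_trans (dV i).
have Pdec : \prod_(i in J) (#|V i|%:R : R) = n0%:R * P'.
  by rewrite (bigD1 i0) //=; congr (_ * _); apply: eq_bigl => i; rewrite !inE andbC.
set L := [set v in V i0 | tau' * P' < #|fib H i0 v|%:R].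
have LV : L \subset V i0 by apply/subsetP => v; rewrite inE => /andP[].
have Lsize : #|L|%:R <= rho * n0%:R.
  have s1 : (\sum_(v in L) #|fib H i0 v| <= #|H|)%N.
    have := partition_card (fun x : {ffun 'I_k -> T} => x i0) H (fun v => v \in L).
    move=> e; rewrite e; apply: subset_leq_card; apply/subsetP => x; rewrite inE.
    by case/andP.
  have s2 : #|L|%:R * (tau' * P') <= (\sum_(v in L) #|fib H i0 v|)%:R.
    have -> : #|L|%:R * (tau' * P') = \sum_(v in L) (tau' * P') by rewrite sumr_const mulr_natl.
    rewrite natr_sum; apply: ler_sum => v.
    by rewrite inE => /andP[_ /ltW].
  have s3 : #|L|%:R * (tau' * P') <= (rho * n0%:R) * (tau' * P').
    apply: (le_trans s2); apply: (le_trans _ (le_trans Hs _)); first by rewrite ler_nat.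
    by rewrite Pdec (_ : tau' * rho * (n0%:R * P') = rho * n0%:R * (tau' * P')) //; ring.
  by move: s3; rewrite ler_pM2r // mulr_gt0.
have Qpos : 0 < (q%:R : R) by rewrite ltr0n.
have lq : 2 < lambda * q%:R by move: qlam; rewrite ltr_pdivrMr // mulrC.
have dq : ((d %/ q)%:R : R) <= lambda / 2 * d%:R.
  have h := leq_divM d q; rewrite -(ler_nat R) natrM in h.
  have x0 : 0 <= ((d %/ q)%:R : R) by apply: ler0n.
  nra.
set m := (d %/ q).+1.
set A := [set W in Om | (m <= #|W i0 :&: L|)%N].
set B := [set W in Om | [exists v in V i0 :\: L, (v \in W i0) &&
           (lambda / 2 * d%:R ^+ n < #|boxJ J' (fib H i0 v) W|%:R)]].
have incl : [set W in Om | lambda * d%:R ^+ n.+1 < #|boxJ J H W|%:R] \subset A :|: B.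
  apply/subsetP => W; rewrite !inE => /andP[WO Hev]; rewrite WO /=.
  case: (boolP (m <= _)%N) => //= nA.
  apply: contraT => nB.
  have Wd : forall i, #|W i| = d.
    by move=> i; move: WO => /forallP/(_ i)/andP[_ /eqP].
  have WV : W i0 \subset V i0.
    by move: WO => /forallP/(_ i0)/andP[].
  have hB : forall v, v \in W i0 -> v \notin L ->
      #|boxJ J' (fib H i0 v) W|%:R <= lambda / 2 * d%:R ^+ n.
    move=> v vW vL; rewrite leNgt; apply: contra nB => h.
    by apply/existsP; exists v; rewrite in_setD vL (subsetP WV) // vW h.
  have bnd : forall v, v \in W i0 -> #|boxJ J' (fib H i0 v) W|%:R <=
      (v \in L)%:R * d%:R ^+ n + lambda / 2 * d%:R ^+ n.
    move=> v vW.
    have bb : (#|boxJ J' (fib H i0 v) W| <= d ^ n)%N.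
      by apply: box_bound => //; apply: fib_inj.
    have dn0 : 0 <= (d%:R : R) ^+ n by apply: exprn_ge0; apply: ler0n.
    case vL: (v \in L).
      rewrite mul1r; apply: ler_wpDr; first by apply: mulr_ge0 => //; apply: ltW.
      by rewrite -natrX ler_nat.
    by rewrite mul0r add0r hB ?vL.
  have key : #|boxJ J H W|%:R <= lambda * d%:R ^+ n.+1.
    rewrite (box_decomp _ _ i0J) natr_sum.
    apply: (le_trans (ler_sum _ bnd)).
    rewrite big_split /= -mulr_suml sumr_const Wd.
    have e : \sum_(v in W i0) ((v \in L)%:R : R) = #|W i0 :&: L|%:R.
      have e0 := card_sum_ind (W i0) (fun v => v \in L).
      have -> : W i0 :&: L = [set z in W i0 | z \in L] by apply/setP => z; rewrite !inE.
      by rewrite e0 natr_sum.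
    rewrite e.
    have cWL : (#|W i0 :&: L|%:R : R) <= (d %/ q)%:R by rewrite ler_nat -ltnS ltnNge.
    have dn0 : 0 <= (d%:R : R) ^+ n by apply: exprn_ge0; apply: ler0n.
    rewrite exprS -mulr_natl.
    have c0 : 0 <= (#|W i0 :&: L|%:R : R) by apply: ler0n.
    nra.
  by move: Hev; rewrite ltNge key.
have O0 : 0 <= (#|Om|%:R : R) by apply: ler0n.
have a2 : 0 <= (alpha / 2) ^+ d by apply: exprn_ge0; lra.
have hA : #|A|%:R <= (alpha / 2) ^+ d * #|Om|%:R.
  have h := one_dim_nat m LV (dV i0).
  rewrite -(ler_nat R) !natrM !natrX in h.
  have Lm : (#|L|%:R : R) ^+ m <= rho ^+ m * n0%:R ^+ m.
    by rewrite -exprMn; apply: lerXn2r; rewrite ?nnegrE ?ler0n // mulr_ge0 ?ler0n // ltW.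
  have rm : rho ^+ m <= gam ^+ d.
    rewrite /rho -exprM; apply: ler_wiXn2l; [exact: ltW | lra |].
    by apply: ltnW; rewrite mulnC; apply: ltn_ceil.
  have g2 : gam ^+ d * 2%:R ^+ d <= (alpha / 2) ^+ d.
    by rewrite -exprMn; apply: lerXn2r; rewrite ?nnegrE; lra.
  have n0m : 0 < (n0%:R : R) ^+ m by apply: exprn_gt0; rewrite ltr0n.
  set N := (n0%:R : R) ^+ m in Lm n0m h *.
  set TT := (2%:R : R) ^+ d in g2 h *.
  have T0 : 0 <= TT by apply: exprn_ge0; apply: ler0n.
  have rm0 : 0 <= rho ^+ m by apply: exprn_ge0; apply: ltW.
  rewrite -(ler_pM2r n0m); apply: (le_trans h).
  have s1 : (#|L|%:R : R) ^+ m * #|Om|%:R * TT <= rho ^+ m * N * #|Om|%:R * TT.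
    by apply: ler_wpM2r => //; apply: ler_wpM2r.
  apply: (le_trans s1).
  have s2 : rho ^+ m * N * #|Om|%:R * TT <= gam ^+ d * N * #|Om|%:R * TT.
    apply: ler_wpM2r => //; apply: ler_wpM2r => //; apply: ler_wpM2r => //; exact: ltW.
  apply: (le_trans s2).
  have -> : gam ^+ d * N * #|Om|%:R * TT = (gam ^+ d * TT) * (#|Om|%:R * N) by ring.
  have -> : (alpha / 2) ^+ d * #|Om|%:R * N = (alpha / 2) ^+ d * (#|Om|%:R * N) by ring.
  by apply: ler_wpM2r => //; apply: mulr_ge0 => //; apply: ltW.
have hB : #|B|%:R <= (alpha / 2) ^+ d * #|Om|%:R.
  case: (posnP #|Om|) => [Oe|Opos].
    have : (#|B| <= #|Om|)%N.
      by apply: subset_leq_card; apply/subsetP => W; rewrite inE => /andP[].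
    rewrite Oe leqn0 => /eqP ->; by apply: mulr_ge0.
  have Opos' : 0 < (#|Om|%:R : R) by rewrite ltr0n.
  have U := union_bound (V i0 :\: L) Om (fun v W => (v \in W i0) &&
             (lambda / 2 * d%:R ^+ n < #|boxJ J' (fib H i0 v) W|%:R)).
  have each : forall v, v \in V i0 :\: L ->
     (#|[set W in Om | (v \in W i0) &&
             (lambda / 2 * d%:R ^+ n < #|boxJ J' (fib H i0 v) W|%:R)]|%:R : R) <=
     #|[set W in Om | v \in W i0]|%:R * (alpha / 4) ^+ d.
    move=> v; rewrite in_setD => /andP[vL vV].
    have inv : invar i0 (fun W => lambda / 2 * d%:R ^+ n < #|boxJ J' (fib H i0 v) W|%:R).
      move=> W B0.
      suff -> : boxJ J' (fib H i0 v) (upd W i0 B0) = boxJ J' (fib H i0 v) W by [].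
      apply/setP => x; rewrite !inE.
      congr (_ && _); apply: eq_forallb => i; case iJ: (i \in J') => //=.
      rewrite /upd ffunE; move: iJ; rewrite !inE => /andP[ne _].
      by rewrite (negbTE ne).
    have hi := indep V d v inv.
    have IHv := Htau' T V d (fib H i0 v) J' J'n d1 dV.
    have IHv' := IHv _ (fib_inj (i0 := i0) (v := v) hinj).
    have HVf : forall x, x \in fib H i0 v -> forall i, i \in J' -> x i \in V i.
      move=> x; rewrite inE => /andP[xH _] i; rewrite !inE => /andP[_ iJ].
      exact: HV.
    have Hsf : #|fib H i0 v|%:R <= tau' * P'.
      by move: vL; rewrite !inE vV /= -leNgt.
    have := IHv' HVf Hsf => IB.
    have e : [set W in Om | (v \in W i0) &&
             (lambda / 2 * d%:R ^+ n < #|boxJ J' (fib H i0 v) W|%:R)] =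
             [set W in Om | (lambda / 2 * d%:R ^+ n < #|boxJ J' (fib H i0 v) W|%:R) &&
             (v \in W i0)].
      by apply/setP => W; rewrite !inE [X in _ && X]andbC.
    rewrite e -(ler_pM2r Opos') -natrM hi natrM.
    have := ler_wpM2l (ler0n R #|[set W in Om | v \in W i0]|) IB.
    by move=> h; apply: (le_trans h); rewrite mulrA.
  have dd : (alpha / 4) ^+ d * d%:R <= (alpha / 2) ^+ d.
    have e : alpha / 4 = (alpha / 2) / 2 by field.
    rewrite e expr_div_n -mulrA; apply: ler_piMr => //.
    have p2 : 0 < (2 : R) ^+ d by apply: exprn_gt0.
    rewrite mulrC ler_pdivrMr // mul1r.
    have := ltn_expl d (isT : (1 < 2)%N); rewrite -(ltr_nat R) natrX => /ltW.
    done.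
  rewrite -(ler_nat R) natr_sum in U; apply: (le_trans U).
  apply: (le_trans (ler_sum _ each)).
  rewrite -mulr_suml -natr_sum.
  have sm := sum_mem V d i0 (V i0 :\: L); rewrite -(ler_nat R) natrM in sm.
  have a4 : 0 <= (alpha / 4) ^+ d by apply: exprn_ge0; lra.
  apply: (le_trans (ler_wpM2r a4 sm)).
  have -> : d%:R * #|Om|%:R * (alpha / 4) ^+ d = ((alpha / 4) ^+ d * d%:R) * #|Om|%:R by ring.
  by apply: ler_wpM2r.
have tot : (#|[set W in Om | (lambda * d%:R ^+ n.+1 < #|boxJ J H W|%:R)%R]| <= #|A| + #|B|)%N.
  by apply: (leq_trans (subset_leq_card incl)); rewrite cardsU leq_subr.
rewrite -(ler_nat R) natrD in tot; apply: (le_trans tot).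
have f2 : (alpha / 2) ^+ d * 2 <= alpha ^+ d.
  rewrite expr_div_n -mulrA; apply: ler_piMr; first by apply: exprn_ge0; lra.
  have p2 : 0 < (2 : R) ^+ d by apply: exprn_gt0.
  rewrite mulrC ler_pdivrMr // mul1r.
  have := leq_pexp2l (isT : (0 < 2)%N) d1; rewrite -(ler_nat R) !natrX expr1.
  done.
apply: (le_trans (_ : _ <= (alpha / 2) ^+ d * 2 * #|Om|%:R)); last by apply: ler_wpM2r.
have := lerD hA hB; move=> h; apply: (le_trans h).
by rewrite (_ : (alpha / 2) ^+ d * 2 * #|Om|%:R =
   (alpha / 2) ^+ d * #|Om|%:R + (alpha / 2) ^+ d * #|Om|%:R) //; ring.
Qed.
End Main.

Unset Implicit Arguments.
Theorem lemma3p6 (R : realType) (k : nat) (alpha lambda : R) :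
  (1 <= k)%N -> 0 < alpha -> 0 < lambda ->
  exists tau : R, 0 < tau /\
    forall (T : finType) (V : 'I_k -> {set T}) (d : nat)
           (H : {set {ffun 'I_k -> T}}),
      (2 <= d)%N ->
      (forall i, d <= #|V i|)%N ->
      (forall x, x \in H -> forall i, x i \in V i) ->
      #|H|%:R <= tau * \prod_(i < k) (#|V i|%:R : R) ->
      unif_prob R (dsubfamilies V d)
        (fun W => lambda * (d%:R ^+ k) < #|box_inter H W|%:R)
      <= alpha ^+ d.
Proof.
move=> k1 a0 l0.
have [tau [t0 [t1 Ht]]] := @claim R k k alpha lambda a0 l0.
exists tau; split => // T V d H d2 dV HV Hs.
have d1 : (1 <= d)%N by apply: leq_trans d2.
have Jn : #|[set: 'I_k]| = k by rewrite cardsT card_ord.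
have HV' : forall x, x \in H -> forall i, i \in [set: 'I_k] -> x i \in V i.
  by move=> x xH i _; exact: HV.
have hinj : injJ [set: 'I_k] H.
  by move=> x y _ _ h; apply/ffunP => i; apply: h; rewrite inE.
have Hs' : #|H|%:R <= tau * \prod_(i in [set: 'I_k]) (#|V i|%:R : R).
  by rewrite (eq_bigl (fun i => true)) // => i; rewrite inE.
have := Ht T V d H [set: 'I_k] Jn d1 dV HV' hinj Hs'.
have eb : forall W, boxJ [set: 'I_k] H W = box_inter H W.
  move=> W; apply/setP => x; rewrite !inE; congr (_ && _).
  by apply: eq_forallb => i; rewrite inE.
rewrite /unif_prob.
have ee : [set W in dsubfamilies V d | lambda * d%:R ^+ k < #|boxJ [set: 'I_k] H W|%:R] =
          [set W in dsubfamilies V d | lambda * d%:R ^+ k < #|box_inter H W|%:R].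
  by apply/setP => W; rewrite !inE eb.
rewrite ee => h.
case: (posnP #|dsubfamilies V d|) => [->|pos].
  by rewrite invr0 mulr0; apply: exprn_ge0; apply: ltW.
by rewrite ler_pdivrMr ?ltr0n.
Qed.
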